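(* Let $n\ge6$ be even and let $\varrho:G_n\to\mathcal L$ be a homomorphism. Then $\mathrm{Area}_n(p,q;\varrho)$ does not depend on the choice of $p,q\in\overline{\mathrm B}W$.
   Context: Let $W$ be a 2-dimensional complex vector space with a hermitian form $\langle\cdot,\cdot\rangle$ of signature $(+,-)$. In $\mathbb{CP}W$ let $\mathrm BW$ be the negative points (the Poincaré disc, curvature $-1$, oriented by its complex structure), $\mathrm SW$ the isotropic points, $\overline{\mathrm B}W=\mathrm BW\cup\mathrm SW$; $\mathcal L=\mathrm{PU}(W)$ is the group of orientation-preserving isometries of $\mathrm BW$. Oriented triangle area: $\mathrm{Area}\,\Delta(p_1,p_2,p_3)=2\arg(-\langle p_1,p_2\rangle\langle p_2,p_3\rangle\langle p_3,p_1\rangle)$ ($\arg\in[-\pi,\pi]$) if no two vertices are equal isotropic points, $0$ otherwise. $\mathrm{Area}(p_1,\dots,p_m):=\sum_{k=1}^m\mathrm{Area}\,\Delta(c,p_k,p_{k+1})$ (indices mod $m$), independent of $c\in\overline{\mathrm B}W$. $H_n$ is the group generated by $r_1,\dots,r_n$ with relations $r_i^2=1$, $r_n\cdots r_1=1$, indices mod $n$; for even $n$, $G_n\le H_n$ is the index-2 subgroup of words of even length in the $r_i$. Put $v_i:=r_i\cdots r_2r_1$ for $0\le i\le n-1$ ($v_0=1$); for $0\le i\le n-2$ put $w_i:=v_i$ if $i$ is even and $w_i:=v_ir_n$ if $i$ is odd, and $w_{i+n-1}:=r_nw_ir_n$; indices of the $w_i$ are mod $2n-2$; all $w_i\in G_n$.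 Write $w_ix$ for $\varrho(w_i)x$. Define $\mathrm{Area}_n(p,q;\varrho):=\mathrm{Area}(w_0p,w_1q,w_2p,w_3q,\dots,w_{2n-4}p,w_{2n-3}q)$ (the $2n-2$ points $w_jx_j$, with $x_j=p$ for even $j$ and $x_j=q$ for odd $j$). *)

(* Defs.v *)
From Stdlib Require Import Reals List Arith Relations ClassicalDescription.
From Coquelicot Require Import Coquelicot.
Import ListNotations.
Open Scope R_scope.

(** Principal argument of a complex number, with values in (-PI, PI];
    arg 0 = 0 (only used on non-zero numbers). *)
Definition arg (z : C) : R :=
  let x := Re z in let y := Im z in
  match Rlt_dec 0 x with
  | left _ => atan (y / x)
  | right _ =>
    match Rlt_dec x 0 with
    | left _ => match Rle_dec 0 y with
                | left _ => atan (y / x) + PI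
                | right _ => atan (y / x) - PI end
    | right _ =>
      match Rlt_dec 0 y with
      | left _ => PI / 2
      | right _ => match Rlt_dec y 0 with
                   | left _ => - (PI / 2)
                   | right _ => 0 end end
    end
  end.

(** Vectors of W = C^2 and 2x2 complex matrices ((a,b),(c,d)) = [[a,b],[c,d]]. *)
Definition vec := (C * C)%type.
Definition mat := (C * C * C * C)%type.

Definition mat_app (A : mat) (z : vec) : vec :=
  let '(a, b, c, d) := A in (a * fst z + b * snd z, c * fst z + d * snd z)%C.

Definition mat_mul (A B : mat) : mat :=
  let '(a, b, c, d) := A in let '(a', b', c', d') := B in
  (a * a' + b * c', a * b' + b * d', c * a' + d * c', c * b' + d * d')%C.

Definition mat_scale (l : C) (A : mat) : mat :=
  let '(a, b, c, d) := A in (l * a, l * b, l * c, l * d)%C.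

Definition mat_one : mat := (RtoC 1, RtoC 0, RtoC 0, RtoC 1).

(** Projective equality of matrices: equal up to a non-zero scalar
    (equality in PU(W) for matrices in U(W)). *)
Definition proj_eq (A B : mat) : Prop :=
  exists l : C, l <> RtoC 0 /\ A = mat_scale l B.

(** A hermitian form on C^2 given by the hermitian matrix
    Hm = [[ha, hb], [conj hb, hd]] (ha hd real):
    <z, w> = w^* Hm z  (linear in z, antilinear in w). *)
Record hform := HForm { ha : R; hb : C; hd : R }.

Definition herm (H : hform) (z w : vec) : C :=
  (Cconj (fst w) * (RtoC (ha H) * fst z + hb H * snd z)
   + Cconj (snd w) * (Cconj (hb H) * fst z + RtoC (hd H) * snd z))%C.

(** signature (+,-) for a 2x2 hermitian matrix  <=>  negative determinant *)
Definition signature_pm (H : hform) : Prop :=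
  ha H * hd H - (Cmod (hb H))² < 0.

Definition is_unitary (H : hform) (A : mat) : Prop :=
  forall z w, herm H (mat_app A z) (mat_app A w) = herm H z w.

(** Points of closed B W, represented by (non-zero) vectors. *)
Definition in_closed_ball (H : hform) (v : vec) : Prop :=
  v <> (RtoC 0, RtoC 0) /\ Re (herm H v v) <= 0.

Definition isotropic (H : hform) (v : vec) : Prop := herm H v v = RtoC 0.

(** equal as points of CP W (proportional non-zero vectors) *)
Definition proj_same (u v : vec) : Prop :=
  (fst u * snd v - snd u * fst v)%C = RtoC 0.

Definition equal_isotropic (H : hform) (u v : vec) : Prop :=
  isotropic H u /\ isotropic H v /\ proj_same u v.

Definition Pdec (P : Prop) : {P} + {~ P} :=
  ClassicalDescription.excluded_middle_informative P.

Definition area_tri (H : hform) (p1 p2 p3 : vec) : R :=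
  if Pdec (equal_isotropic H p1 p2 \/ equal_isotropic H p2 p3
           \/ equal_isotropic H p3 p1)
  then 0
  else 2 * arg (- (herm H p1 p2 * herm H p2 p3 * herm H p3 p1))%C.

(** Area(p_1,...,p_m) computed with the auxiliary point c:
    sum_k Area Delta(c, p_k, p_{k+1}), indices mod m. *)
Fixpoint area_chain (H : hform) (c first : vec) (l : list vec) : R :=
  match l with
  | [] => 0
  | [y] => area_tri H c y first
  | y :: ((z :: _) as t) => area_tri H c y z + area_chain H c first t
  end.

Definition area_poly (H : hform) (c : vec) (l : list vec) : R :=
  match l with
  | [] => 0
  | x :: _ => area_chain H c x l
  end.

(** Words in the generators r_1..r_n: a word [a1; ...; ak] stands for
    r_{a1} r_{a2} ... r_{ak}. *)
Definition word := list nat.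
Definition valid_word (n : nat) (w : word) : Prop :=
  List.Forall (fun i => (1 <= i <= n)%nat) w.

(** One elementary move for the presentation of H_n:
    deleting r_i r_i, or deleting r_n ... r_1. *)
Inductive Hn_step (n : nat) : word -> word -> Prop :=
  | Hn_sq : forall u v i, (1 <= i <= n)%nat -> Hn_step n (u ++ i :: i :: v) (u ++ v)
  | Hn_rel : forall u v, Hn_step n (u ++ rev (seq 1 n) ++ v) (u ++ v).

Definition Hn_eq (n : nat) : word -> word -> Prop :=
  clos_refl_sym_trans word (Hn_step n).

Definition even_word (w : word) : Prop := Nat.Even (length w).

(** rho encodes a homomorphism G_n -> PU(W): on valid words of even length
    (elements of G_n) it takes values in U(W), and modulo scalars it is
    compatible with the relations of H_n and multiplicative. *)
Definition Gn_rep (n : nat) (H : hform) (rho : word -> mat) : Prop :=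
  (forall w, valid_word n w -> even_word w -> is_unitary H (rho w)) /\
  proj_eq (rho []) mat_one /\
  (forall u v, valid_word n u -> even_word u -> valid_word n v -> even_word v ->
     proj_eq (rho (u ++ v)) (mat_mul (rho u) (rho v))) /\
  (forall u v, valid_word n u -> even_word u -> valid_word n v -> even_word v ->
     Hn_eq n u v -> proj_eq (rho u) (rho v)).

Definition vword (i : nat) : word := rev (seq 1 i).

Definition wword (n j : nat) : word :=
  let w0 i := if Nat.even i then vword i else vword i ++ [n] in
  if (j <? n - 1)%nat then w0 j
  else [n] ++ w0 (j - (n - 1))%nat ++ [n].

Definition Area_pts (n : nat) (rho : word -> mat) (p q : vec) : list vec :=
  map (fun j => mat_app (rho (wword n j)) (if Nat.even j then p else q))
      (seq 0 (2 * n - 2)).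

Definition Area_n (H : hform) (n : nat) (rho : word -> mat) (c p q : vec) : R :=
  area_poly H c (Area_pts n rho p q).

(* Main.v *)
Require Import Defs.
From Stdlib Require Import Reals List Arith.
From Coquelicot Require Import Coquelicot.
From Stdlib Require Import Lia Lra Relations.
Import ListNotations.
Open Scope R_scope.

Ltac cdestr := repeat match goal with
  | v : vec |- _ => destruct v
  | H : hform |- _ => destruct H
  | z : C |- _ => destruct z
  | z : (C * C)%type |- _ => destruct z
  end.
Ltac csimpl := unfold herm, Cconj, Cmult, Cplus, Copp, Cminus, RtoC in *; simpl in *.
Ltac cring := cdestr; csimpl; apply injective_projections; simpl; ring.

Lemma herm_conj H z w : herm H z w = Cconj (herm H w z).
Proof. cring. Qed.

Definition detv (u v : vec) : C := (fst u * snd v - snd u * fst v)%C.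
Definition detH (H : hform) : C := (RtoC (ha H) * RtoC (Defs.hd H) - hb H * Cconj (hb H))%C.

Lemma gram2 H u v :
  (herm H u u * herm H v v - herm H v u * herm H u v)%C
  = (Cconj (detv u v) * detH H * detv u v)%C.
Proof. unfold detv, detH. cring. Qed.

Lemma herm_self_im H u : Im (herm H u u) = 0.
Proof. cdestr. csimpl. unfold Im. simpl. ring. Qed.

Definition T (H : hform) (x y z : vec) : C :=
  (- (herm H x y * herm H y z * herm H z x))%C.

Lemma gram3 H x1 x2 x3 y1 y2 y3 :
  let g i j := herm H j i in
  (g x1 y1 * g x2 y2 * g x3 y3 + g x1 y2 * g x2 y3 * g x3 y1
   + g x1 y3 * g x2 y1 * g x3 y2 - g x1 y1 * g x2 y3 * g x3 y2
   - g x1 y2 * g x2 y1 * g x3 y3 - g x1 y3 * g x2 y2 * g x3 y1)%C = RtoC 0.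
Proof.
  intros g. unfold g, herm.
  destruct x1 as [a1 a2], x2 as [b1 b2], x3 as [c1 c2],
     y1 as [d1 d2], y2 as [e1 e2], y3 as [f1 f2]; simpl.
  ring.
Qed.

Definition nrm (z : C) : R := Re z * Re z + Im z * Im z.
Definition hr H u := Re (herm H u u).

Lemma nrm_ge0 z : 0 <= nrm z.
Proof. unfold nrm. nra. Qed.

Lemma nrm0 z : nrm z = 0 -> z = RtoC 0.
Proof. destruct z as [a b]; unfold nrm, Re, Im; simpl; intros.
  assert (a = 0) by nra. assert (b = 0) by nra. subst. reflexivity. Qed.

Lemma nrm_pos z : z <> RtoC 0 -> 0 < nrm z.
Proof. intros Hz. destruct (Rle_lt_dec (nrm z) 0) as [h|h]; auto.
  exfalso. apply Hz, nrm0. pose proof (nrm_ge0 z). lra. Qed.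

Lemma herm_self H u : herm H u u = RtoC (hr H u).
Proof. unfold hr. pose proof (herm_self_im H u). destruct (herm H u u) as [a b].
  unfold Re, Im in *; simpl in *. subst. reflexivity. Qed.

Lemma CS_id H u v :
  hr H u * hr H v - nrm (herm H u v) = nrm (detv u v) * (ha H * Defs.hd H - nrm (hb H)).
Proof.
  pose proof (gram2 H u v) as G. rewrite (herm_conj H v u) in G.
  rewrite !herm_self in G.
  destruct (herm H u v) as [a b]. destruct (detv u v) as [d1 d2].
  destruct H as [h1 [h2 h3] h4]. simpl in *. unfold detH in G. simpl in G.
  apply (f_equal fst) in G. unfold nrm, Re, Im. simpl in *.
  unfold Cconj, Cmult, Cminus, Cplus, Copp, RtoC in G; simpl in G. nra.
Qed.

Definition sigm (H : hform) := ha H * Defs.hd H - nrm (hb H) < 0.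

Lemma sig_sigm H : signature_pm H -> sigm H.
Proof. unfold signature_pm, sigm, nrm. intros h.
  destruct (hb H) as [a b]. unfold Cmod in h. simpl in *.
  rewrite Rsqr_sqrt in h. unfold Re, Im; simpl. lra. nra. Qed.

Lemma CS H u v : sigm H -> in_closed_ball H u -> in_closed_ball H v ->
  hr H u * hr H v <= nrm (herm H u v).
Proof. intros s [_ hu] [_ hv]. pose proof (CS_id H u v). unfold sigm in s.
  pose proof (nrm_ge0 (detv u v)). fold (hr H u) in hu. fold (hr H v) in hv. nra. Qed.

Lemma herm0_det H u v : sigm H -> in_closed_ball H u -> in_closed_ball H v ->
  herm H u v = RtoC 0 -> detv u v = RtoC 0.
Proof. intros s [_ hu] [_ hv] h0. pose proof (CS_id H u v) as E. rewrite h0 in E.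
  unfold sigm in s. fold (hr H u) in hu. fold (hr H v) in hv.
  apply nrm0. pose proof (nrm_ge0 (detv u v)).
  assert (nrm (RtoC 0) = 0) by (unfold nrm, Re, Im; simpl; ring). nra. Qed.

Lemma Cmult_integral (a b : C) : (a * b = RtoC 0)%C -> a = RtoC 0 \/ b = RtoC 0.
Proof. intros h. destruct (Ceq_dec a (RtoC 0)); auto. destruct (Ceq_dec b (RtoC 0)); auto.
  exfalso. exact (Cmult_neq_0 a b n n0 h). Qed.

Definition vscale (l : C) (u : vec) : vec := (l * fst u, l * snd u)%C.

Lemma det_prop u v : u <> (RtoC 0, RtoC 0) -> detv u v = RtoC 0 ->
  exists l, v = vscale l u.
Proof.
  destruct u as [u1 u2], v as [v1 v2]. unfold detv, vscale; simpl. intros hu hd0.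
  destruct (Ceq_dec u1 (RtoC 0)) as [e|e].
  - subst. assert (u2 <> RtoC 0) by (intro; subst; apply hu; reflexivity).
    exists (v2 / u2)%C. f_equal.
    + assert (Hx: (RtoC 0 * v2 - u2 * v1)%C = (- (u2 * v1))%C) by ring.
      assert (v1 = RtoC 0).
      { assert (u2 * v1 = RtoC 0)%C. { transitivity (- (RtoC 0 * v2 - u2 * v1))%C; [ring| rewrite hd0; ring]. }
        apply Cmult_integral in H0. destruct H0; [contradiction|auto]. }
      subst. ring.
    + field. auto.
  - exists (v1 / u1)%C. f_equal.
    + field. auto.
    + assert (u1 * v2 = u2 * v1)%C.
      { transitivity ((u1*v2 - u2*v1) + u2*v1)%C; [ring | rewrite hd0; ring]. }
      replace v2 with (u1 * v2 / u1)%C by (field; auto). rewrite H. field. auto.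
Qed.

Lemma cart_id H x y z :
  2 * Re (T H x y z) = hr H x * hr H y * hr H z - hr H x * nrm (herm H y z)
     - hr H y * nrm (herm H z x) - hr H z * nrm (herm H x y).
Proof.
  pose proof (gram3 H x y z x y z) as G. simpl in G.
  rewrite (herm_conj H y x), (herm_conj H z y), (herm_conj H x z) in G.
  rewrite !herm_self in G. unfold T.
  destruct (herm H x y) as [a1 a2], (herm H y z) as [b1 b2], (herm H z x) as [c1 c2].
  apply (f_equal fst) in G. unfold nrm, Re, Im.
  unfold Cconj, Cmult, Cminus, Cplus, Copp, RtoC in *; simpl in *. nra.
Qed.

Lemma cartan H x y z : sigm H -> in_closed_ball H x -> in_closed_ball H y ->
  in_closed_ball H z -> 0 <= Re (T H x y z).
Proof.
  intros s hx hy hz. pose proof (cart_id H x y z) as E.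
  pose proof (CS H y z s hy hz). pose proof (CS H z x s hz hx). pose proof (CS H x y s hx hy).
  destruct hx as [_ a], hy as [_ b], hz as [_ c]. fold (hr H x) in a. fold (hr H y) in b. fold (hr H z) in c.
  set (A := hr H x) in *. set (B := hr H y) in *. set (Cc := hr H z) in *.
  assert (- A * nrm (herm H y z) >= - A * (B * Cc)) by nra.
  assert (- B * nrm (herm H z x) >= - B * (Cc * A)) by nra.
  assert (- Cc * nrm (herm H x y) >= - Cc * (A * B)) by nra.
  assert (A * B >= 0) by nra. assert (A * B * Cc <= 0) by nra. nra.
Qed.

Lemma T0_of H x y z : T H x y z <> RtoC 0 -> herm H y z <> RtoC 0.
Proof. intros h e. apply h. unfold T. rewrite e. ring. Qed.

Lemma cartan_eq H x y z : sigm H -> in_closed_ball H x -> in_closed_ball H y ->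
  in_closed_ball H z -> Re (T H x y z) = 0 -> T H x y z <> RtoC 0 -> hr H x = 0.
Proof.
  intros s hx hy hz e0 nz. pose proof (cart_id H x y z) as E.
  pose proof (CS H y z s hy hz). pose proof (CS H z x s hz hx). pose proof (CS H x y s hx hy).
  pose proof (nrm_pos _ (T0_of H x y z nz)) as Np.
  destruct hx as [_ a], hy as [_ b], hz as [_ c]. fold (hr H x) in a. fold (hr H y) in b. fold (hr H z) in c.
  set (A := hr H x) in *. set (B := hr H y) in *. set (Cc := hr H z) in *.
  assert (t1: 0 <= - A * (nrm (herm H y z) - B * Cc)) by (apply Rmult_le_pos; lra).
  assert (t2: 0 <= - B * (nrm (herm H z x) - Cc * A)) by (apply Rmult_le_pos; lra).
  assert (t3: 0 <= - Cc * (nrm (herm H x y) - A * B)) by (apply Rmult_le_pos; lra).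
  assert (A * B >= 0) by nra. assert (t4: A * B * Cc <= 0) by nra.
  assert (A * B * Cc = 0) by nra.
  assert (Z0: A * nrm (herm H y z) = 0) by nra.
  apply Rmult_integral in Z0. destruct Z0; auto. lra.
Qed.

Lemma T_cyc H x y z : T H y z x = T H x y z.
Proof. unfold T. ring. Qed.

Lemma T_swap H x y z : T H x z y = Cconj (T H x y z).
Proof. unfold T. rewrite (herm_conj H x z), (herm_conj H z y), (herm_conj H y x).
  rewrite Copp_conj, !Cmult_conj. ring. Qed.

Lemma herm_scale_l H l x y : herm H (vscale l x) y = (l * herm H x y)%C.
Proof. unfold vscale. cring. Qed.
Lemma herm_scale_r H l x y : herm H x (vscale l y) = (Cconj l * herm H x y)%C.
Proof. unfold vscale. cring. Qed.

Lemma conj_nrm l : (l * Cconj l)%C = RtoC (nrm l).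
Proof. destruct l. unfold nrm, Cconj, Cmult, RtoC, Re, Im; simpl. f_equal; ring. Qed.

Lemma T_scale1 H l x y z : T H (vscale l x) y z = (RtoC (nrm l) * T H x y z)%C.
Proof. unfold T. rewrite herm_scale_l, herm_scale_r, <- conj_nrm. ring. Qed.
Lemma T_scale2 H l x y z : T H x (vscale l y) z = (RtoC (nrm l) * T H x y z)%C.
Proof. rewrite <- (T_cyc H x (vscale l y) z), T_scale1, (T_cyc H x y z). reflexivity. Qed.
Lemma T_scale3 H l x y z : T H x y (vscale l z) = (RtoC (nrm l) * T H x y z)%C.
Proof. rewrite <- (T_cyc H x y (vscale l z)), T_scale2, (T_cyc H x y z). reflexivity. Qed.

Lemma T_unit H A x y z : is_unitary H A ->
  T H (mat_app A x) (mat_app A y) (mat_app A z) = T H x y z.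
Proof. intros U. unfold T. rewrite !U. reflexivity. Qed.

Lemma area_tri_T H x y z : area_tri H x y z = 2 * arg (T H x y z).
Proof.
  unfold area_tri. destruct (Pdec _) as [h|h]; auto.
  assert (E: T H x y z = RtoC 0).
  { assert (K: forall u v, equal_isotropic H u v -> herm H u v = RtoC 0).
    { intros u v [iu [iv ps]]. pose proof (gram2 H u v) as G.
      unfold isotropic in iu, iv. unfold proj_same in ps. fold (detv u v) in ps.
      rewrite iu, iv, ps, (herm_conj H v u) in G.
      destruct (herm H u v) as [a b]. destruct (detH H) as [d1 d2].
      apply (f_equal fst) in G. unfold Cconj, Cmult, Cminus, Cplus, Copp, RtoC in G; simpl in G.
      assert (a = 0) by nra. assert (b = 0) by nra. subst. reflexivity. }
    unfold T. destruct h as [h|[h|h]]; apply K in h; rewrite h; ring. }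
  rewrite E. unfold arg. simpl. destruct (Rlt_dec 0 0); try lra.
Qed.

Lemma sqrt_1t_pos t : 0 < sqrt (1 + t²).
Proof. apply sqrt_lt_R0. pose proof (Rle_0_sqr t). lra. Qed.

Lemma cmod_split x y : 0 < x \/ x < 0 ->
  sqrt (x ^ 2 + y ^ 2) = Rabs x * sqrt (1 + (y/x)²).
Proof.
  intros hx. assert (x <> 0) by lra.
  replace (x ^ 2 + y ^ 2) with ((Rabs x * Rabs x) * (1 + (y/x)²)).
  2:{ rewrite <- Rabs_mult. rewrite Rabs_right by nra. unfold Rsqr. field. auto. }
  rewrite sqrt_mult. rewrite sqrt_square; auto. apply Rabs_pos.
  apply Rmult_le_pos; apply Rabs_pos. pose proof (Rle_0_sqr (y/x)). lra.
Qed.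

Lemma polar z : Cmod z * cos (arg z) = Re z /\ Cmod z * sin (arg z) = Im z.
Proof.
  destruct z as [x y]. unfold arg, Cmod, Re, Im; simpl fst; simpl snd.
  destruct (Rlt_dec 0 x) as [h|h].
  - rewrite cmod_split by auto. rewrite Rabs_right by lra. rewrite cos_atan, sin_atan.
    pose proof (sqrt_1t_pos (y/x)). split; field; lra.
  - destruct (Rlt_dec x 0) as [h2|h2].
    + rewrite cmod_split by auto. rewrite Rabs_left by lra.
      pose proof (sqrt_1t_pos (y/x)).
      destruct (Rle_dec 0 y).
      * rewrite neg_cos, neg_sin, cos_atan, sin_atan. split; field; lra.
      * unfold Rminus. rewrite <- (Ropp_involutive (atan (y/x) + - PI)).
        rewrite cos_neg, sin_neg. replace (- (atan (y/x) + - PI)) with (- atan (y/x) + PI) by ring.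
        rewrite neg_cos, neg_sin, cos_neg, sin_neg, cos_atan, sin_atan. split; field; lra.
    + assert (x = 0) by lra. subst x.
      replace (0 ^ 2 + y ^ 2) with (y * y) by ring.
      destruct (Rlt_dec 0 y).
      * rewrite sqrt_square by lra. rewrite cos_PI2, sin_PI2. split; ring.
      * destruct (Rlt_dec y 0).
        -- replace (y*y) with ((-y)*(-y)) by ring. rewrite sqrt_square by lra.
           rewrite cos_neg, sin_neg, cos_PI2, sin_PI2. split; ring.
        -- assert (y = 0) by lra. subst. rewrite Rmult_0_l, sqrt_0. split; ring.
Qed.

Lemma arg_range z : 0 <= Re z -> - (PI/2) <= arg z <= PI/2.
Proof.
  destruct z as [x y]. unfold arg, Re, Im; simpl fst; simpl snd. intros hx.
  pose proof PI_RGT_0.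
  destruct (Rlt_dec 0 x) as [h|h].
  - pose proof (atan_bound (y/x)). lra.
  - destruct (Rlt_dec x 0) as [h2|h2]; [lra|].
    destruct (Rlt_dec 0 y); [lra|]. destruct (Rlt_dec y 0); lra.
Qed.

Lemma arg_top z : 0 <= Re z -> arg z = PI/2 -> Re z = 0 /\ 0 < Im z.
Proof.
  destruct z as [x y]. unfold arg, Re, Im; simpl fst; simpl snd. intros hx e.
  pose proof PI_RGT_0.
  destruct (Rlt_dec 0 x) as [h|h].
  - pose proof (atan_bound (y/x)). lra.
  - destruct (Rlt_dec x 0) as [h2|h2]; [lra|].
    destruct (Rlt_dec 0 y); [lra|]. destruct (Rlt_dec y 0); lra.
Qed.

Lemma arg_bot z : 0 <= Re z -> arg z = - (PI/2) -> Re z = 0 /\ Im z < 0.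
Proof.
  destruct z as [x y]. unfold arg, Re, Im; simpl fst; simpl snd. intros hx e.
  pose proof PI_RGT_0.
  destruct (Rlt_dec 0 x) as [h|h].
  - pose proof (atan_bound (y/x)). lra.
  - destruct (Rlt_dec x 0) as [h2|h2]; [lra|].
    destruct (Rlt_dec 0 y); [lra|]. destruct (Rlt_dec y 0); lra.
Qed.

Lemma arg_conj z : 0 <= Re z -> arg (Cconj z) = - arg z.
Proof.
  destruct z as [x y]. unfold arg, Cconj, Re, Im; simpl fst; simpl snd. intros hx.
  destruct (Rlt_dec 0 x) as [h|h].
  - replace (-y/x) with (-(y/x)) by (field; lra). apply atan_opp.
  - destruct (Rlt_dec x 0) as [h2|h2]; [lra|].
    destruct (Rlt_dec 0 (-y)); destruct (Rlt_dec 0 y); try lra;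
    destruct (Rlt_dec (-y) 0); destruct (Rlt_dec y 0); lra.
Qed.

Lemma arg_scale k z : 0 < k -> arg (RtoC k * z)%C = arg z.
Proof.
  intros hk. destruct z as [x y]. unfold arg, Cmult, RtoC, Re, Im; simpl fst; simpl snd.
  replace (k * x - 0 * y) with (k * x) by ring. replace (k * y + 0 * x) with (k * y) by ring.
  replace (k * y / (k * x)) with (y / x).
  2:{ destruct (Req_dec x 0). subst. unfold Rdiv. rewrite Rmult_0_r, !Rinv_0. ring. field. lra. }
  destruct (Rlt_dec 0 (k*x)); destruct (Rlt_dec 0 x); try nra;
  destruct (Rlt_dec (k*x) 0); destruct (Rlt_dec x 0); try nra;
  destruct (Rle_dec 0 (k*y)); destruct (Rle_dec 0 y); try nra;
  destruct (Rlt_dec 0 (k*y)); destruct (Rlt_dec 0 y); try nra;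
  destruct (Rlt_dec (k*y) 0); destruct (Rlt_dec y 0); try nra.
Qed.

Lemma arg0 : arg (RtoC 0) = 0.
Proof. unfold arg, RtoC, Re, Im; simpl. destruct (Rlt_dec 0 0); try lra. Qed.

Lemma cos1_0 x : -(2*PI) < x < 2*PI -> cos x = 1 -> x = 0.
Proof.
  intros hx hc. pose proof PI_RGT_0.
  assert (hs: sin x = 0). { pose proof (sin2_cos2 x). rewrite hc in H0. unfold Rsqr in H0.
    assert (sin x * sin x = 0) by lra. destruct (Rmult_integral _ _ H1); auto. }
  destruct (Rle_dec 0 x).
  - destruct (sin_eq_O_2PI_0 x r ltac:(lra) hs) as [e|[e|e]]; auto; try lra.
    rewrite e, cos_PI in hc. lra.
  - assert (0 <= -x <= 2*PI) by lra. rewrite <- (Ropp_involutive x) in hs.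
    rewrite sin_neg in hs. assert (hs2: sin (-x) = 0) by lra.
    destruct (sin_eq_O_2PI_0 (-x) ltac:(lra) ltac:(lra) hs2) as [e|[e|e]]; try lra.
    rewrite <- (Ropp_involutive x), cos_neg, e, cos_PI in hc. lra.
Qed.

Lemma polarC z : z = (Cmod z * cos (arg z), Cmod z * sin (arg z)).
Proof. destruct (polar z) as [a b]. rewrite a, b. destruct z; reflexivity. Qed.

Lemma arg_add3 X Y Z W k : 0 < k ->
  X <> RtoC 0 -> Y <> RtoC 0 -> Z <> RtoC 0 -> W <> RtoC 0 ->
  0 <= Re X -> 0 <= Re Y -> 0 <= Re Z -> 0 <= Re W ->
  (X * Y * Z = RtoC k * W)%C ->
  ~ (arg X = PI/2 /\ arg Y = PI/2 /\ arg Z = PI/2 /\ arg W = -(PI/2)) ->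
  ~ (arg X = -(PI/2) /\ arg Y = -(PI/2) /\ arg Z = -(PI/2) /\ arg W = PI/2) ->
  arg X + arg Y + arg Z = arg W.
Proof.
  intros hk nX nY nZ nW rX rY rZ rW E b1 b2.
  pose proof (arg_range X rX). pose proof (arg_range Y rY).
  pose proof (arg_range Z rZ). pose proof (arg_range W rW).
  pose proof PI_RGT_0.
  apply Cmod_gt_0 in nX, nY, nZ, nW.
  set (a := arg X) in *. set (b := arg Y) in *. set (c := arg Z) in *. set (t := arg W) in *.
  rewrite (polarC X), (polarC Y), (polarC Z), (polarC W) in E. fold a b c t in E.
  set (mX := Cmod X) in *. set (mY := Cmod Y) in *. set (mZ := Cmod Z) in *. set (mW := Cmod W) in *.
  assert (E1 := f_equal fst E). assert (E2 := f_equal snd E).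
  unfold Cmult, RtoC in E1, E2. simpl in E1, E2.
  set (M := mX * mY * mZ).
  assert (F1: M * cos (a + b + c) = k * mW * cos t).
  { unfold M. repeat rewrite ?cos_plus, ?sin_plus. nra. }
  assert (F2: M * sin (a + b + c) = k * mW * sin t).
  { unfold M. repeat rewrite ?cos_plus, ?sin_plus. nra. }
  assert (Mp: 0 < M) by (unfold M; repeat apply Rmult_lt_0_compat; auto).
  assert (Kp: 0 < k * mW) by (apply Rmult_lt_0_compat; auto).
  assert (M = k * mW).
  { pose proof (sin2_cos2 (a+b+c)) as s1. pose proof (sin2_cos2 t) as s2. unfold Rsqr in *.
    assert (e1: (M*cos (a+b+c))*(M*cos (a+b+c)) + (M*sin (a+b+c))*(M*sin (a+b+c))
       = M*M*(sin (a+b+c) * sin (a+b+c) + cos (a+b+c) * cos (a+b+c))) by ring.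
    rewrite F1, F2, s1 in e1.
    assert (e2: (k*mW*cos t)*(k*mW*cos t) + (k*mW*sin t)*(k*mW*sin t)
       = (k*mW)*(k*mW)*(sin t * sin t + cos t * cos t)) by ring.
    rewrite s2 in e2.
    assert (e3: (M - k*mW) * (M + k*mW) = 0) by nra.
    apply Rmult_integral in e3. lra. }
  assert (cs: cos (a+b+c) = cos t). { rewrite H4 in F1. apply Rmult_eq_reg_l in F1; lra. }
  assert (sn: sin (a+b+c) = sin t). { rewrite H4 in F2. apply Rmult_eq_reg_l in F2; lra. }
  assert (cos (a+b+c - t) = 1).
  { rewrite cos_minus, cs, sn. pose proof (sin2_cos2 t). unfold Rsqr in *. lra. }
  assert (a + b + c - t = 0).
  { apply cos1_0; auto. split.
    - destruct (Req_dec (a+b+c-t) (-(2*PI))); [|lra]. exfalso. apply b2. lra.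
    - destruct (Req_dec (a+b+c-t) (2*PI)); [|lra]. exfalso. apply b1. lra. }
  lra.
Qed.

Lemma iso_alg (ab bc ca da db dc : C) :
  let X := (-(da*ab*Cconj db))%C in let Y := (-(db*bc*Cconj dc))%C in
  let W := (-(ab*bc*ca))%C in
  let D := (-(dc*Cconj ab*ab) + Cconj ca*Cconj ab*db + bc*da*ab)%C in
  (RtoC(nrm ab)*Y + RtoC(nrm bc)*X - RtoC(nrm db)*W - RtoC(nrm bc)*(X + Cconj X) = db*bc*Cconj D)%C.
Proof.
  destruct ab, bc, ca, da, db, dc. unfold nrm, Re, Im, Cconj, Cmult, Cplus, Cminus, Copp, RtoC; simpl.
  apply injective_projections; simpl; ring.
Qed.

Lemma iso_rel H a b c d : hr H a = 0 -> hr H b = 0 ->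
  nrm (herm H a b) * Im (T H d b c) + nrm (herm H b c) * Im (T H d a b)
  - nrm (herm H d b) * Im (T H a b c) = 0.
Proof.
  intros ha0 hb0.
  pose proof (gram3 H c a b d a b) as G. simpl in G.
  rewrite !herm_self, ha0, hb0 in G.
  rewrite (herm_conj H a c), (herm_conj H b a) in G.
  pose proof (iso_alg (herm H a b) (herm H b c) (herm H c a) (herm H d a) (herm H d b) (herm H d c)) as K.
  simpl in K.
  assert (Dz: (-(herm H d c*Cconj (herm H a b)*herm H a b) + Cconj (herm H c a)*Cconj (herm H a b)*herm H d b
     + herm H b c*herm H d a*herm H a b)%C = RtoC 0).
  { rewrite <- G. ring. }
  rewrite Dz in K.
  unfold T. rewrite (herm_conj H c d), (herm_conj H b d).
  apply (f_equal snd) in K.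
  set (X := (- (herm H d a * herm H a b * Cconj (herm H d b)))%C) in *.
  set (Y := (- (herm H d b * herm H b c * Cconj (herm H d c)))%C) in *.
  set (W := (- (herm H a b * herm H b c * herm H c a))%C) in *.
  destruct X as [x1 x2], Y as [y1 y2], W as [w1 w2].
  destruct (herm H d b), (herm H b c).
  unfold Im, Cconj, Cmult, Cplus, Cminus, Copp, RtoC in *; simpl in *. nra.
Qed.

Lemma herm0_scale H u v : sigm H -> in_closed_ball H u -> in_closed_ball H v ->
  herm H u v = RtoC 0 -> exists l, l <> RtoC 0 /\ v = vscale l u.
Proof.
  intros s hu hv h0. destruct (det_prop u v (proj1 hu) (herm0_det H u v s hu hv h0)) as [l e].
  exists l. split; auto. intro; subst. apply (proj1 hv). unfold vscale. simpl.
  f_equal; ring.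
Qed.

Lemma herm0_sym H u v : herm H u v = RtoC 0 -> herm H v u = RtoC 0.
Proof. intros h. rewrite herm_conj, h. unfold Cconj, RtoC; simpl. f_equal; ring. Qed.

Lemma nrm_pos' l : l <> RtoC 0 -> 0 < nrm l.
Proof. apply nrm_pos. Qed.

Lemma argT_s1 H l x y z : l <> RtoC 0 -> arg (T H (vscale l x) y z) = arg (T H x y z).
Proof. intros. rewrite T_scale1. apply arg_scale, nrm_pos; auto. Qed.
Lemma argT_s2 H l x y z : l <> RtoC 0 -> arg (T H x (vscale l y) z) = arg (T H x y z).
Proof. intros. rewrite T_scale2. apply arg_scale, nrm_pos; auto. Qed.
Lemma argT_s3 H l x y z : l <> RtoC 0 -> arg (T H x y (vscale l z)) = arg (T H x y z).
Proof. intros. rewrite T_scale3. apply arg_scale, nrm_pos; auto. Qed.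

Lemma T_z12 H x y z : herm H x y = RtoC 0 -> arg (T H x y z) = 0.
Proof. intros h. unfold T. rewrite h. replace (- (RtoC 0 * herm H y z * herm H z x))%C with (RtoC 0) by ring. apply arg0. Qed.
Lemma T_z23 H x y z : herm H y z = RtoC 0 -> arg (T H x y z) = 0.
Proof. intros h. unfold T. rewrite h. replace (- (herm H x y * RtoC 0 * herm H z x))%C with (RtoC 0) by ring. apply arg0. Qed.
Lemma T_z31 H x y z : herm H z x = RtoC 0 -> arg (T H x y z) = 0.
Proof. intros h. unfold T. rewrite h. replace (- (herm H x y * herm H y z * RtoC 0))%C with (RtoC 0) by ring. apply arg0. Qed.

Lemma argT_swap H x y z : sigm H -> in_closed_ball H x -> in_closed_ball H y ->
  in_closed_ball H z -> arg (T H x z y) = - arg (T H x y z).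
Proof. intros s hx hy hz. rewrite T_swap. apply arg_conj, cartan; auto. Qed.

Lemma T_nz H x y z : herm H x y <> RtoC 0 -> herm H y z <> RtoC 0 -> herm H z x <> RtoC 0 ->
  T H x y z <> RtoC 0.
Proof. intros h1 h2 h3 e. unfold T in e.
  assert (herm H x y * herm H y z * herm H z x = RtoC 0)%C.
  { transitivity (- (- (herm H x y * herm H y z * herm H z x)))%C. ring. rewrite e. ring. }
  apply Cmult_integral in H0. destruct H0 as [H0|H0]; [apply Cmult_integral in H0; destruct H0|]; auto. Qed.

Lemma cocycle H a b c d : sigm H -> in_closed_ball H a -> in_closed_ball H b ->
  in_closed_ball H c -> in_closed_ball H d ->
  arg (T H a b c) = arg (T H d a b) + arg (T H d b c) + arg (T H d c a).
Proof.
  intros s ha hb hc hd.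
  destruct (Ceq_dec (herm H d a) (RtoC 0)) as [e|nda].
  { destruct (herm0_scale H a d s ha hd (herm0_sym _ _ _ e)) as [l [nl ->]].
    rewrite (T_z12 H _ a b e), (T_z31 H _ c a (herm0_sym _ _ _ e)), argT_s1 by auto. ring. }
  destruct (Ceq_dec (herm H d b) (RtoC 0)) as [e|ndb].
  { destruct (herm0_scale H b d s hb hd (herm0_sym _ _ _ e)) as [l [nl ->]].
    rewrite (T_z31 H _ a b (herm0_sym _ _ _ e)), (T_z12 H _ b c e), argT_s1 by auto.
    rewrite (T_cyc H a b c). ring. }
  destruct (Ceq_dec (herm H d c) (RtoC 0)) as [e|ndc].
  { destruct (herm0_scale H c d s hc hd (herm0_sym _ _ _ e)) as [l [nl ->]].
    rewrite (T_z31 H _ b c (herm0_sym _ _ _ e)), (T_z12 H _ c a e), argT_s1 by auto.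
    rewrite <- (T_cyc H c a b). ring. }
  destruct (Ceq_dec (herm H a b) (RtoC 0)) as [e|nab].
  { rewrite (T_z12 H a b c e), (T_z23 H d a b e).
    destruct (herm0_scale H b a s hb ha (herm0_sym _ _ _ e)) as [l [nl ->]].
    rewrite argT_s3 by auto. rewrite (argT_swap H d b c) by auto. ring. }
  destruct (Ceq_dec (herm H b c) (RtoC 0)) as [e|nbc].
  { rewrite (T_z23 H a b c e), (T_z23 H d b c e).
    destruct (herm0_scale H c b s hc hb (herm0_sym _ _ _ e)) as [l [nl ->]].
    rewrite argT_s3 by auto. rewrite (argT_swap H d c a) by auto. ring. }
  destruct (Ceq_dec (herm H c a) (RtoC 0)) as [e|nca].
  { rewrite (T_z31 H a b c e), (T_z23 H d c a e).
    destruct (herm0_scale H a c s ha hc (herm0_sym _ _ _ e)) as [l [nl ->]].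
    rewrite argT_s3 by auto. rewrite (argT_swap H d a b) by auto. ring. }
  assert (nz: forall u v, herm H u v <> RtoC 0 -> herm H v u <> RtoC 0).
  { intros u v h1 h2. apply h1. apply herm0_sym; auto. }
  assert (Wn: T H a b c <> RtoC 0) by (apply T_nz; auto).
  assert (Xn: T H d a b <> RtoC 0) by (apply T_nz; auto).
  assert (Yn: T H d b c <> RtoC 0) by (apply T_nz; auto).
  assert (Zn: T H d c a <> RtoC 0) by (apply T_nz; auto).
  symmetry. apply (arg_add3 _ _ _ _ (nrm (herm H d a) * nrm (herm H d b) * nrm (herm H d c))).
  - repeat apply Rmult_lt_0_compat; apply nrm_pos; auto.
  - auto. - auto. - auto. - auto.
  - apply cartan; auto. - apply cartan; auto. - apply cartan; auto. - apply cartan; auto.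
  - unfold T. rewrite (herm_conj H b d), (herm_conj H c d), (herm_conj H a d).
    rewrite !RtoC_mult. rewrite <- !conj_nrm. ring.
  - intros [h1 [h2 [h3 h4]]].
    destruct (arg_top _ (cartan H d a b s hd ha hb) h1) as [_ i1].
    destruct (arg_top _ (cartan H d b c s hd hb hc) h2) as [_ i2].
    destruct (arg_bot _ (cartan H a b c s ha hb hc) h4) as [r4 i4].
    pose proof (cartan_eq H a b c s ha hb hc r4 Wn) as za.
    assert (r4': Re (T H b c a) = 0) by (rewrite T_cyc; auto).
    assert (Wn': T H b c a <> RtoC 0) by (rewrite T_cyc; auto).
    pose proof (cartan_eq H b c a s hb hc ha r4' Wn') as zb.
    pose proof (iso_rel H a b c d za zb).
    pose proof (nrm_pos _ nab). pose proof (nrm_pos _ nbc). pose proof (nrm_pos _ ndb). nra.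
  - intros [h1 [h2 [h3 h4]]].
    destruct (arg_bot _ (cartan H d a b s hd ha hb) h1) as [_ i1].
    destruct (arg_bot _ (cartan H d b c s hd hb hc) h2) as [_ i2].
    destruct (arg_top _ (cartan H a b c s ha hb hc) h4) as [r4 i4].
    pose proof (cartan_eq H a b c s ha hb hc r4 Wn) as za.
    assert (r4': Re (T H b c a) = 0) by (rewrite T_cyc; auto).
    assert (Wn': T H b c a <> RtoC 0) by (rewrite T_cyc; auto).
    pose proof (cartan_eq H b c a s hb hc ha r4' Wn') as zb.
    pose proof (iso_rel H a b c d za zb).
    pose proof (nrm_pos _ nab). pose proof (nrm_pos _ nbc). pose proof (nrm_pos _ ndb). nra.
Qed.

Definition Ar H x y z := arg (T H x y z).

Fixpoint ssum (f : nat -> R) (k : nat) : R :=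
  match k with O => 0 | S k => ssum f k + f k end.

Lemma ssum_S f k : ssum f (S k) = ssum f k + f k.
Proof. reflexivity. Qed.

Lemma ssum_ext f g k : (forall j, (j < k)%nat -> f j = g j) -> ssum f k = ssum g k.
Proof. induction k; simpl; intros h; auto. rewrite IHk by (intros; apply h; lia). rewrite h by lia. auto. Qed.

Lemma ssum_shift f k : ssum f (S k) = f O + ssum (fun j => f (S j)) k.
Proof. induction k. simpl. ring. change (ssum f (S (S k))) with (ssum f (S k) + f (S k)).
  rewrite IHk. simpl. ring. Qed.

Lemma ssum_plus f g k : ssum (fun j => f j + g j) k = ssum f k + ssum g k.
Proof. induction k; simpl; auto. ring. rewrite IHk. ring. Qed.
Lemma ssum_minus f g k : ssum (fun j => f j - g j) k = ssum f k - ssum g k.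
Proof. induction k; simpl; auto. ring. rewrite IHk. ring. Qed.

Lemma ssum_tele g k : ssum (fun j => g j - g (S j)) k = g O - g k.
Proof. induction k; simpl. ring. rewrite IHk. ring. Qed.

Lemma ssum_split f a b : ssum f (a + b) = ssum f a + ssum (fun t => f (a + t)%nat) b.
Proof. induction b. simpl. rewrite Nat.add_0_r. ring.
  rewrite Nat.add_succ_r. simpl. rewrite IHb. ring. Qed.

Lemma ssum_one f g k a : (a < k)%nat -> (forall j, (j < k)%nat -> j <> a -> f j = g j) ->
  ssum f k = ssum g k + (f a - g a).
Proof.
  induction k; intros ha h. lia. simpl.
  destruct (Nat.eq_dec a k).
  - subst. rewrite (ssum_ext f g k) by (intros; apply h; lia). ring.
  - rewrite IHk by (try lia; intros; apply h; lia). rewrite (h k) by lia. ring.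
Qed.

Lemma ssum_two f g k a b : (a < k)%nat -> (b < k)%nat -> a <> b ->
  (forall j, (j < k)%nat -> j <> a -> j <> b -> f j = g j) ->
  ssum f k = ssum g k + (f a - g a) + (f b - g b).
Proof.
  intros ha hb nab h.
  set (hh := fun j => if Nat.eq_dec j b then g b else f j).
  rewrite (ssum_one f hh k b hb).
  2:{ intros j hj nj. unfold hh. destruct (Nat.eq_dec j b); [lia|auto]. }
  rewrite (ssum_one hh g k a ha).
  2:{ intros j hj nj. unfold hh. destruct (Nat.eq_dec j b); auto. }
  unfold hh. destruct (Nat.eq_dec a b); [lia|]. destruct (Nat.eq_dec b b); [|lia]. ring.
Qed.

Lemma ssum_cyc f M K : (K <= M)%nat ->
  ssum (fun t => f ((t + K) mod M)%nat) M = ssum f M.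
Proof.
  intros hK. destruct (Nat.eq_dec M 0). subst. reflexivity.
  replace M with ((M - K) + K)%nat at 1 by lia. rewrite ssum_split.
  rewrite (ssum_ext _ (fun t => f (K + t)%nat) (M - K)).
  2:{ intros j hj. f_equal. rewrite Nat.mod_small by lia. lia. }
  rewrite (ssum_ext _ (fun t => f t) K).
  2:{ intros j hj. f_equal. replace (M - K + j + K)%nat with (j + 1 * M)%nat by lia.
      rewrite Nat.Div0.mod_add. apply Nat.mod_small. lia. }
  assert (E: ssum f M = ssum f (K + (M-K))) by (f_equal; lia). rewrite E, ssum_split. apply Rplus_comm.
Qed.

Definition F H c (X : nat -> vec) (m : nat) : R :=
  ssum (fun j => Ar H c (X j) (X (S j))) (m - 1) + Ar H c (X (m - 1)%nat) (X O).

Lemma area_chain_cons2 H c f y z t :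
  area_chain H c f (y :: z :: t) = area_tri H c y z + area_chain H c f (z :: t).
Proof. reflexivity. Qed.

Lemma area_chain_eq H c first X s k :
  area_chain H c first (map X (seq s (S k))) =
  2 * ssum (fun j => Ar H c (X (s + j)%nat) (X (S (s + j)))) k + area_tri H c (X (s + k)%nat) first.
Proof.
  revert s. induction k; intros s.
  - simpl. rewrite Nat.add_0_r. ring.
  - replace (map X (seq s (S (S k)))) with (X s :: X (S s) :: map X (seq (S (S s)) k)) by reflexivity.
    rewrite area_chain_cons2.
    replace (X (S s) :: map X (seq (S (S s)) k)) with (map X (seq (S s) (S k))) by reflexivity.
    rewrite IHk. rewrite ssum_shift. rewrite area_tri_T. unfold Ar.
    rewrite Nat.add_0_r. replace (S s + k)%nat with (s + S k)%nat by lia.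
    rewrite (ssum_ext (fun j => arg (T H c (X (S s + j)%nat) (X (S (S s + j)))))
                      (fun j => arg (T H c (X (s + S j)%nat) (X (S (s + S j)))))).
    ring. intros j _. replace (S s + j)%nat with (s + S j)%nat by lia. reflexivity.
Qed.

Lemma area_poly_F H c X m : (1 <= m)%nat ->
  area_poly H c (map X (seq 0 m)) = 2 * F H c X m.
Proof.
  intros hm. destruct m. lia. unfold area_poly.
  replace (map X (seq 0 (S m))) with (X O :: map X (seq 1 m)) by reflexivity.
  replace (X O :: map X (seq 1 m)) with (map X (seq 0 (S m))) by reflexivity.
  rewrite (area_chain_eq H c (X O) X 0 m). unfold F. rewrite area_tri_T. simpl. rewrite Nat.sub_0_r. unfold Ar. ring.
Qed.

Lemma arg_nnr z : Im z = 0 -> 0 <= Re z -> arg z = 0.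
Proof. destruct z as [x y]. unfold arg, Re, Im; simpl. intros -> hx.
  destruct (Rlt_dec 0 x). unfold Rdiv. rewrite Rmult_0_l. apply atan_0.
  destruct (Rlt_dec x 0). lra. destruct (Rlt_dec 0 0). lra. destruct (Rlt_dec 0 0); lra. Qed.

Lemma Ar_xxy H x y : in_closed_ball H x -> Ar H x x y = 0.
Proof.
  intros [_ hx]. unfold Ar, T. apply arg_nnr.
  - rewrite herm_self, (herm_conj H y x). destruct (herm H x y). unfold Im, Re, RtoC, Cconj, Cmult, Copp; simpl. ring.
  - rewrite herm_self, (herm_conj H y x). fold (hr H x) in hx. destruct (herm H x y).
    unfold Im, Re, RtoC, Cconj, Cmult, Copp; simpl. nra.
Qed.
Lemma Ar_xyx H x y : in_closed_ball H x -> Ar H x y x = 0.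
Proof. intros h. unfold Ar. rewrite (T_cyc H x x y). apply Ar_xxy; auto. Qed.
Lemma Ar_yxx H x y : in_closed_ball H x -> Ar H y x x = 0.
Proof. intros h. unfold Ar. rewrite (T_cyc H x y x). apply Ar_xyx; auto. Qed.

Lemma Ar_cocycle H a b c d : sigm H -> in_closed_ball H a -> in_closed_ball H b ->
  in_closed_ball H c -> in_closed_ball H d ->
  Ar H a b c = Ar H d a b + Ar H d b c + Ar H d c a.
Proof. apply cocycle. Qed.

Lemma Ar_swap H x y z : sigm H -> in_closed_ball H x -> in_closed_ball H y ->
  in_closed_ball H z -> Ar H x z y = - Ar H x y z.
Proof. apply argT_swap. Qed.

Lemma F_c_indep H c c' X m : sigm H -> (1 <= m)%nat -> in_closed_ball H c -> in_closed_ball H c' ->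
  (forall j, (j < m)%nat -> in_closed_ball H (X j)) -> F H c X m = F H c' X m.
Proof.
  intros s hm hc hc' hX.
  set (g := fun j => Ar H c' c (X j)).
  assert (K: forall j, (j < m)%nat -> forall k, (k < m)%nat ->
     Ar H c (X j) (X k) = Ar H c' (X j) (X k) + g j - g k).
  { intros j hj k hk. unfold g. rewrite (Ar_cocycle H c (X j) (X k) c'); auto.
    rewrite (Ar_swap H c' (X k) c); auto. ring. }
  unfold F. rewrite (ssum_ext _ (fun j => Ar H c' (X j) (X (S j)) + (g j - g (S j))) (m-1)).
  2:{ intros j hj. rewrite K by lia. ring. }
  rewrite ssum_plus, ssum_tele. rewrite K by lia.
  replace (m - 1 + 0)%nat with (m-1)%nat by lia. ring.
Qed.

Definition upd (X : nat -> vec) k (Y : vec) := fun j => if Nat.eq_dec j k then Y else X j.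
Definition prevm (m k : nat) := if Nat.eq_dec k 0 then (m - 1)%nat else (k - 1)%nat.
Definition nextm (m k : nat) := if Nat.eq_dec k (m - 1) then O else S k.

Lemma loc H c P E E' N : sigm H -> in_closed_ball H c -> in_closed_ball H P ->
  in_closed_ball H E -> in_closed_ball H E' -> in_closed_ball H N ->
  (Ar H c P E' - Ar H c P E) + (Ar H c E' N - Ar H c E N) = Ar H E P E' - Ar H E N E'.
Proof.
  intros s hc hP hE hE' hN.
  pose proof (Ar_cocycle H c P E' E s hc hP hE' hE) as e1.
  pose proof (Ar_cocycle H c P E E s hc hP hE hE) as e2.
  pose proof (Ar_cocycle H c E' N E s hc hE' hN hE) as e3.
  pose proof (Ar_cocycle H c E N E s hc hE hN hE) as e4.
  rewrite e1, e2, e3, e4.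
  rewrite (Ar_xyx H E P), (Ar_xxy H E c), (Ar_xyx H E c), (Ar_xxy H E N) by auto.
  rewrite (Ar_swap H E E' c), (Ar_swap H E N E') by auto. ring.
Qed.

Lemma vertex_change H c X Y m k : sigm H -> (3 <= m)%nat -> (k < m)%nat ->
  in_closed_ball H c -> (forall j, (j < m)%nat -> in_closed_ball H (X j)) -> in_closed_ball H Y ->
  F H c (upd X k Y) m = F H c X m + Ar H (X k) (X (prevm m k)) Y - Ar H (X k) (X (nextm m k)) Y.
Proof.
  intros s hm hk hc hX hY. unfold F, prevm, nextm.
  destruct (Nat.eq_dec k 0) as [e0|n0].
  - subst k. destruct (Nat.eq_dec 0 (m-1)) as [e|_]; [lia|].
    rewrite (ssum_one _ (fun j => Ar H c (X j) (X (S j))) (m-1) 0) by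
      (try lia; intros j hj nj; unfold upd; destruct (Nat.eq_dec j 0); destruct (Nat.eq_dec (S j) 0); try lia; auto).
    unfold upd. destruct (Nat.eq_dec 0 0); [|lia]. destruct (Nat.eq_dec 1 0); [lia|].
    destruct (Nat.eq_dec (m-1) 0); [lia|].
    pose proof (loc H c (X (m-1)%nat) (X O) Y (X 1%nat) s hc (hX (m-1)%nat ltac:(lia)) (hX O ltac:(lia)) hY (hX 1%nat ltac:(lia))).
    lra.
  - destruct (Nat.eq_dec k (m-1)) as [e1|n1].
    + subst k.
      rewrite (ssum_one _ (fun j => Ar H c (X j) (X (S j))) (m-1) (m-2)) by
        (try lia; intros j hj nj; unfold upd; destruct (Nat.eq_dec j (m-1)); destruct (Nat.eq_dec (S j) (m-1)); try lia; auto).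
      unfold upd. destruct (Nat.eq_dec (m-2) (m-1)); [lia|]. destruct (Nat.eq_dec (S (m-2)) (m-1)); [|lia].
      destruct (Nat.eq_dec (m-1) (m-1)); [|lia]. destruct (Nat.eq_dec 0 (m-1)); [lia|].
      replace (S (m-2)) with (m-1)%nat by lia. replace (m - 1 - 1)%nat with (m-2)%nat by lia.
      pose proof (loc H c (X (m-2)%nat) (X (m-1)%nat) Y (X O) s hc (hX (m-2)%nat ltac:(lia)) (hX (m-1)%nat ltac:(lia)) hY (hX O ltac:(lia))).
      lra.
    + rewrite (ssum_two _ (fun j => Ar H c (X j) (X (S j))) (m-1) (k-1) k) by
        (try lia; intros j hj nj nj'; unfold upd; destruct (Nat.eq_dec j k); destruct (Nat.eq_dec (S j) k); try lia; auto).
      unfold upd. destruct (Nat.eq_dec (k-1) k); [lia|]. destruct (Nat.eq_dec (S (k-1)) k); [|lia].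
      destruct (Nat.eq_dec k k); [|lia]. destruct (Nat.eq_dec (S k) k); [lia|].
      destruct (Nat.eq_dec (m-1) k); [lia|]. destruct (Nat.eq_dec 0 k); [lia|].
      replace (S (k-1)) with k by lia.
      pose proof (loc H c (X (k-1)%nat) (X k) Y (X (S k)) s hc (hX (k-1)%nat ltac:(lia)) (hX k ltac:(lia)) hY (hX (S k) ltac:(lia))).
      lra.
Qed.

Fixpoint Zs (X Y : nat -> vec) (b t : nat) : nat -> vec :=
  match t with O => X | S t => upd (Zs X Y b t) (2*t+b)%nat (Y (2*t+b)%nat) end.

Lemma Zs_or X Y b t j : Zs X Y b t j = X j \/ Zs X Y b t j = Y j.
Proof. induction t; [left; reflexivity|].
  change (Zs X Y b (S t)) with (upd (Zs X Y b t) (2*t+b) (Y (2*t+b)%nat)).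
  unfold upd. destruct (Nat.eq_dec j (2*t+b)); [right; subst; reflexivity | exact IHt]. Qed.

Lemma Zs_notyet X Y b t j : (forall s, (s < t)%nat -> j <> (2*s+b)%nat) -> Zs X Y b t j = X j.
Proof. induction t; [reflexivity|]. intros h.
  change (Zs X Y b (S t)) with (upd (Zs X Y b t) (2*t+b) (Y (2*t+b)%nat)).
  unfold upd. destruct (Nat.eq_dec j (2*t+b)).
  exfalso. apply (h t); auto. apply IHt. intros; apply h; lia. Qed.

Lemma Zs_done X Y b t s : (s < t)%nat -> Zs X Y b t (2*s+b)%nat = Y (2*s+b)%nat.
Proof. induction t; intros h. lia.
  change (Zs X Y b (S t)) with (upd (Zs X Y b t) (2*t+b) (Y (2*t+b)%nat)).
  unfold upd. destruct (Nat.eq_dec (2*s+b) (2*t+b)). rewrite e. auto.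
  apply IHt. lia. Qed.

Lemma F_ext H c X X' m : (1 <= m)%nat -> (forall j, (j < m)%nat -> X j = X' j) -> F H c X m = F H c X' m.
Proof. intros hm h. unfold F. rewrite (ssum_ext _ (fun j => Ar H c (X' j) (X' (S j)))).
  rewrite !h by lia. auto. intros j hj. rewrite !h by lia. auto. Qed.

Lemma even_ne_2s : forall j b s, (b <= 1)%nat -> Nat.even j <> Nat.even b -> j <> (2*s+b)%nat.
Proof. intros j b s hb hne e. subst. apply hne. rewrite Nat.add_comm, Nat.even_add_mul_2. auto. Qed.

Lemma even_prev m k : Nat.Even m -> (k < m)%nat -> Nat.even (prevm m k) = negb (Nat.even k).
Proof.
  intros [M ->] hk. unfold prevm. destruct (Nat.eq_dec k 0).
  - subst. replace (2*M-1)%nat with (2*(M-1)+1)%nat by lia. rewrite Nat.even_odd. auto.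
  - replace k with (S (k-1)) at 2 by lia. rewrite Nat.even_succ, <- Nat.negb_even, Bool.negb_involutive. auto.
Qed.

Lemma even_next m k : Nat.Even m -> (k < m)%nat -> Nat.even (nextm m k) = negb (Nat.even k).
Proof.
  intros [M ->] hk. unfold nextm. destruct (Nat.eq_dec k (2*M-1)).
  - subst. replace (2*M-1)%nat with (2*(M-1)+1)%nat by lia. rewrite Nat.even_odd. auto.
  - rewrite Nat.even_succ, <- Nat.negb_even. auto.
Qed.

Lemma prev_lt m k : (1 <= m)%nat -> (prevm m k < m)%nat \/ k = O -> (k < m)%nat -> (prevm m k < m)%nat.
Proof. intros. unfold prevm. destruct (Nat.eq_dec k 0); lia. Qed.
Lemma prev_lt' m k : (1 <= m)%nat -> (k < m)%nat -> (prevm m k < m)%nat.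
Proof. intros. unfold prevm. destruct (Nat.eq_dec k 0); lia. Qed.
Lemma next_lt' m k : (1 <= m)%nat -> (k < m)%nat -> (nextm m k < m)%nat.
Proof. intros. unfold nextm. destruct (Nat.eq_dec k (m-1)); lia. Qed.

Definition Dterm H (X Y : nat -> vec) m k :=
  Ar H (X k) (X (prevm m k)) (Y k) - Ar H (X k) (X (nextm m k)) (Y k).

Lemma Zs_sum H c X Y b M : sigm H -> (2 <= M)%nat -> (b <= 1)%nat -> in_closed_ball H c ->
  (forall j, (j < 2*M)%nat -> in_closed_ball H (X j)) ->
  (forall j, (j < 2*M)%nat -> in_closed_ball H (Y j)) ->
  forall t, (t <= M)%nat ->
  F H c (Zs X Y b t) (2*M) = F H c X (2*M) + ssum (fun s => Dterm H X Y (2*M) (2*s+b)) t.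
Proof.
  intros s hM hb hc hX hY. induction t; intros ht. simpl. ring.
  change (Zs X Y b (S t)) with (upd (Zs X Y b t) (2*t+b) (Y (2*t+b)%nat)).
  rewrite vertex_change; auto; try lia.
  2:{ intros j hj. destruct (Zs_or X Y b t j) as [e|e]; rewrite e; auto. }
  2:{ apply hY. lia. }
  rewrite IHt by lia. rewrite ssum_S. unfold Dterm.
  assert (Ev: Nat.Even (2*M)) by (exists M; auto).
  rewrite (Zs_notyet X Y b t (2*t+b)) by (intros; lia).
  rewrite (Zs_notyet X Y b t (prevm (2*M) (2*t+b))).
  rewrite (Zs_notyet X Y b t (nextm (2*M) (2*t+b))). ring.
  - intros s0 _. apply even_ne_2s; auto. rewrite even_next by (auto; lia).
    rewrite Nat.add_comm, Nat.even_add_mul_2. destruct (Nat.even b); discriminate.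
  - intros s0 _. apply even_ne_2s; auto. rewrite even_prev by (auto; lia).
    rewrite Nat.add_comm, Nat.even_add_mul_2. destruct (Nat.even b); discriminate.
Qed.

Lemma par_change H c X Y b M : sigm H -> (2 <= M)%nat -> (b <= 1)%nat -> in_closed_ball H c ->
  (forall j, (j < 2*M)%nat -> in_closed_ball H (X j)) ->
  (forall j, (j < 2*M)%nat -> in_closed_ball H (Y j)) ->
  F H c (fun j => if Bool.eqb (Nat.even j) (Nat.even b) then Y j else X j) (2*M)
  = F H c X (2*M) + ssum (fun s => Dterm H X Y (2*M) (2*s+b)) M.
Proof.
  intros s hM hb hc hX hY. rewrite <- (Zs_sum H c X Y b M) by auto.
  apply F_ext. lia. intros j hj.
  destruct (Bool.eqb (Nat.even j) (Nat.even b)) eqn:E.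
  - apply Bool.eqb_prop in E.
    assert (exists s0, j = (2*s0+b)%nat /\ (s0 < M)%nat) as [s0 [-> hs0]].
    { destruct (Nat.Even_or_Odd j) as [[u ->]|[u ->]].
      - exists u. rewrite Nat.even_even in E. destruct b as [|[|]]; [split; lia | simpl in E; discriminate | lia].
      - exists u. rewrite Nat.even_odd in E. destruct b as [|[|]]; [simpl in E; discriminate | split; lia | lia]. }
    symmetry. apply Zs_done. auto.
  - symmetry. apply Zs_notyet. intros s0 _. apply even_ne_2s; auto.
    intro e. rewrite e in E. rewrite Bool.eqb_reflx in E. discriminate.
Qed.

Close Scope R_scope.
Open Scope nat_scope.

Section W.
Variable n : nat.

Lemma Heq_refl u : Hn_eq n u u.
Proof. apply rst_refl. Qed.
Lemma Heq_sym u v : Hn_eq n u v -> Hn_eq n v u.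
Proof. apply rst_sym. Qed.
Lemma Heq_trans u v w : Hn_eq n u v -> Hn_eq n v w -> Hn_eq n u w.
Proof. apply rst_trans. Qed.

Lemma Heq_ctx a b u v : Hn_eq n u v -> Hn_eq n (a ++ u ++ b) (a ++ v ++ b).
Proof.
  induction 1.
  - apply rst_step. destruct H.
    + replace (a ++ (u ++ i :: i :: v) ++ b) with ((a ++ u) ++ i :: i :: (v ++ b))
        by (rewrite <- !app_assoc; reflexivity).
      replace (a ++ (u ++ v) ++ b) with ((a ++ u) ++ (v ++ b)) by (rewrite <- !app_assoc; reflexivity).
      apply Hn_sq; auto.
    + replace (a ++ (u ++ rev (seq 1 n) ++ v) ++ b) with ((a ++ u) ++ rev (seq 1 n) ++ (v ++ b))
        by (rewrite <- !app_assoc; reflexivity).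
      replace (a ++ (u ++ v) ++ b) with ((a ++ u) ++ (v ++ b)) by (rewrite <- !app_assoc; reflexivity).
      apply Hn_rel.
  - apply rst_refl.
  - apply rst_sym; auto.
  - eapply rst_trans; eauto.
Qed.

Lemma Heq_l a u v : Hn_eq n u v -> Hn_eq n (a ++ u) (a ++ v).
Proof. intros h. pose proof (Heq_ctx a [] u v h). rewrite !app_nil_r in H. auto. Qed.
Lemma Heq_r b u v : Hn_eq n u v -> Hn_eq n (u ++ b) (v ++ b).
Proof. intros h. apply (Heq_ctx [] b u v h). Qed.

Lemma Heq_pair u v i : 1 <= i <= n -> Hn_eq n (u ++ i :: i :: v) (u ++ v).
Proof. intros; apply rst_step; apply Hn_sq; auto. Qed.

Lemma Heq_R u v : Hn_eq n (u ++ rev (seq 1 n) ++ v) (u ++ v).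
Proof. apply rst_step; apply Hn_rel. Qed.

Lemma Heq_inv w : valid_word n w -> Hn_eq n (rev w ++ w) [].
Proof.
  induction w as [|a w IH]; intros hv. apply Heq_refl.
  inversion hv; subst. simpl. rewrite <- app_assoc. simpl.
  eapply Heq_trans. apply Heq_pair; auto. apply IH; auto.
Qed.

Lemma valid_rev w : valid_word n w -> valid_word n (rev w).
Proof. unfold valid_word. rewrite !Forall_forall. intros h x hx. apply h. apply in_rev; auto. Qed.

Lemma Heq_inv' w : valid_word n w -> Hn_eq n (w ++ rev w) [].
Proof. intros h. pose proof (Heq_inv (rev w) (valid_rev w h)). rewrite rev_involutive in H. auto. Qed.

Lemma valid_seq k : k <= n -> valid_word n (rev (seq 1 k)).
Proof. intros hk. apply valid_rev. unfold valid_word. rewrite Forall_forall. intros x hx.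
  apply in_seq in hx. lia. Qed.

Lemma Heq_seq : Hn_eq n (seq 1 n) [].
Proof.
  pose proof (Heq_R (rev (rev (seq 1 n))) []) as h. rewrite !app_nil_r in h.
  apply Heq_sym in h. eapply Heq_trans. rewrite <- (rev_involutive (seq 1 n)) at 1. exact h.
  apply Heq_inv. apply valid_seq. lia.
Qed.

Lemma Heq_rev u v : Hn_eq n u v -> Hn_eq n (rev u) (rev v).
Proof.
  induction 1.
  - destruct H.
    + rewrite !rev_app_distr. simpl. rewrite <- !app_assoc. simpl.
      apply Heq_pair; auto.
    + rewrite !rev_app_distr, rev_involutive. rewrite <- app_assoc.
      pose proof (Heq_ctx (rev v) (rev u) (seq 1 n) [] Heq_seq). simpl in H. auto.
  - apply Heq_refl.
  - apply Heq_sym; auto.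
  - eapply Heq_trans; eauto.
Qed.

End W.

Close Scope nat_scope.
Open Scope R_scope.
Close Scope R_scope.
Open Scope nat_scope.

Definition w0 (n i : nat) : word := if Nat.even i then vword i else vword i ++ [n].
Definition Tl (n l : nat) : word := rev (vword (l-1)) ++ [l] ++ vword (l-1) ++ [n].
Definition lidx (n i : nat) : nat := if i <=? n - 2 then i + 1 else i + 2 - n.
Definition nextw (m k : nat) := if Nat.eq_dec k (m - 1) then O else S k.
Definition Sw (n i : nat) : word := rev (wword n i) ++ wword n (nextw (2*n-2) i).

Lemma vword_S k : vword (S k) = S k :: vword k.
Proof. unfold vword. rewrite seq_S, rev_unit. reflexivity. Qed.

Lemma rev_Tl n l : rev (Tl n l) = n :: rev (vword (l-1)) ++ l :: vword (l-1).
Proof. unfold Tl. rewrite !rev_app_distr, rev_involutive. simpl. rewrite <- !app_assoc. reflexivity. Qed.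

Lemma wword_lo n j : j < n - 1 -> wword n j = w0 n j.
Proof. intros h. unfold wword, w0. apply Nat.ltb_lt in h. rewrite h. reflexivity. Qed.
Lemma wword_hi n j : n - 1 <= j -> wword n j = [n] ++ w0 n (j - (n-1)) ++ [n].
Proof. intros h. unfold wword, w0. destruct (j <? n - 1) eqn:E.
  apply Nat.ltb_lt in E. lia. reflexivity. Qed.

Lemma even_S i : Nat.even (S i) = negb (Nat.even i).
Proof. rewrite Nat.even_succ, <- Nat.negb_even. reflexivity. Qed.

Ltac leq := repeat (progress (simpl; rewrite <- ?app_assoc)); reflexivity.

Section S.
Variable n : nat.
Hypothesis Hn : 4 <= n.
Hypothesis Hev : Nat.Even n.

Lemma even_n : Nat.even n = true.
Proof. apply Nat.even_spec; auto. Qed.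

Lemma SwA i : i <= n - 3 ->
  Sw n i = rev (w0 n i) ++ w0 n (S i) /\
  Sw n i = (if Nat.even i then Tl n (i+1) else rev (Tl n (i+1))).
Proof.
  intros hi. unfold Sw, nextw. destruct (Nat.eq_dec i (2*n-2-1)); [lia|].
  rewrite !wword_lo by lia. split; auto.
  unfold w0. rewrite even_S. replace (i + 1 - 1) with i by lia. rewrite vword_S.
  destruct (Nat.even i); simpl.
  - unfold Tl. replace (i+1-1) with i by lia. replace (i+1) with (S i) by lia. reflexivity.
  - rewrite rev_Tl. replace (i+1-1) with i by lia. replace (i+1) with (S i) by lia.
    rewrite rev_app_distr. simpl. reflexivity.
Qed.

Lemma vword_n : vword n = n :: vword (n-1).
Proof. replace n with (S (n-1)) at 1 by lia. rewrite vword_S. f_equal. lia. Qed.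

Lemma hn1 : 1 <= n <= n.
Proof. lia. Qed.

Lemma vn1_n : Hn_eq n (vword (n-1) ++ [n]) [].
Proof.
  eapply Heq_trans. apply Heq_sym. apply (Heq_pair n [] (vword (n-1) ++ [n]) n hn1).
  rewrite app_nil_l.
  assert (E: n :: n :: vword (n-1) ++ [n] = [n] ++ rev (seq 1 n) ++ [n]).
  { change (rev (seq 1 n)) with (vword n). rewrite vword_n. reflexivity. }
  rewrite E. eapply Heq_trans. apply Heq_R. apply (Heq_pair n [] [] n hn1).
Qed.

Lemma vn1_eq : Hn_eq n (vword (n-1)) [n].
Proof.
  eapply Heq_trans. apply Heq_sym. apply (Heq_pair n [] (vword (n-1)) n hn1).
  rewrite app_nil_l.
  assert (E: n :: n :: vword (n-1) = [n] ++ rev (seq 1 n) ++ []).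
  { rewrite app_nil_r. change (rev (seq 1 n)) with (vword n). rewrite vword_n. reflexivity. }
  rewrite E. eapply Heq_trans. apply Heq_R. apply Heq_refl.
Qed.

Lemma Sw_canon i : i < 2*n - 2 ->
  Hn_eq n (Sw n i) (if Nat.even i then Tl n (lidx n i) else rev (Tl n (lidx n i))).
Proof.
  intros hi. unfold lidx.
  destruct (le_lt_dec i (n-3)) as [hA|hA].
  - destruct (i <=? n-2) eqn:E; [|apply Nat.leb_gt in E; lia].
    rewrite (proj2 (SwA i hA)). apply Heq_refl.
  - destruct (Nat.eq_dec i (n-2)) as [hB|hB].
    +
      subst i. destruct (n - 2 <=? n-2) eqn:E; [|apply Nat.leb_gt in E; lia].
      assert (Ee: Nat.even (n-2) = true).
      { destruct Hev as [N ->]. replace (2*N-2) with (2*(N-1)) by lia. apply Nat.even_even. }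
      rewrite Ee. unfold Sw, nextw. destruct (Nat.eq_dec (n-2) (2*n-2-1)); [lia|].
      rewrite wword_lo by lia. rewrite wword_hi by lia. replace (S (n-2) - (n-1)) with 0 by lia.
      unfold w0. rewrite Ee. simpl. unfold Tl. replace (n-2+1) with (n-1) by lia.
      replace (n-1-1) with (n-2) by lia. apply Heq_l.
      eapply Heq_trans. apply (Heq_pair n [] [] n hn1). simpl.
      apply Heq_sym. replace (n-1 :: vword (n-2) ++ [n]) with (vword (n-1) ++ [n]).
      apply vn1_n. replace (n-1) with (S (n-2)) at 1 by lia. rewrite vword_S, <- app_comm_cons. f_equal. lia.
    + destruct (Nat.eq_dec i (2*n-3)) as [hD|hD].
      *
        subst i. destruct (2*n-3 <=? n-2) eqn:E; [apply Nat.leb_le in E; lia|].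
        assert (Eo: Nat.even (2*n-3) = false).
        { replace (2*n-3) with (2*(n-2)+1) by lia. apply Nat.even_odd. }
        rewrite Eo. replace (2*n-3+2-n) with (n-1) by lia.
        unfold Sw, nextw. destruct (Nat.eq_dec (2*n-3) (2*n-2-1)); [|lia].
        rewrite wword_hi by lia. rewrite wword_lo by lia. replace (2*n-3-(n-1)) with (n-2) by lia.
        assert (Ee: Nat.even (n-2) = true).
        { destruct Hev as [N ->]. replace (2*N-2) with (2*(N-1)) by lia. apply Nat.even_even. }
        assert (W0: w0 n 0 = []) by reflexivity. rewrite W0, app_nil_r.
        unfold w0. rewrite Ee. rewrite rev_Tl. replace (n-1-1) with (n-2) by lia.
        assert (R1: rev ([n] ++ vword (n-2) ++ [n]) = [n] ++ rev (vword (n-2)) ++ [n])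
          by (rewrite !rev_app_distr; reflexivity).
        rewrite R1.
        change (n :: rev (vword (n-2)) ++ n - 1 :: vword (n-2)) with ([n] ++ rev (vword (n-2)) ++ (n - 1 :: vword (n-2))).
        rewrite !app_assoc. apply Heq_l.
        replace (n-1 :: vword (n-2)) with (vword (n-1)).
        apply Heq_sym, vn1_eq. replace (n-1) with (S (n-2)) at 1 by lia. rewrite vword_S. f_equal. lia.
      *
        remember (i - (n-1)) as j eqn:Hj.
        assert (hj: j <= n - 3) by lia.
        destruct (i <=? n-2) eqn:E; [apply Nat.leb_le in E; lia|].
        replace (i + 2 - n) with (j + 1) by lia.
        destruct (SwA j hj) as [e1 e2].
        assert (Sw n i = [n] ++ rev (w0 n j) ++ [n] ++ [n] ++ w0 n (S j) ++ [n]).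
        { unfold Sw, nextw. destruct (Nat.eq_dec i (2*n-2-1)); [lia|].
          rewrite !wword_hi by lia. replace (S i - (n-1)) with (S j) by lia. rewrite <- Hj.
          rewrite !rev_app_distr. simpl. rewrite <- !app_assoc. reflexivity. }
        rewrite H. clear H.
        assert (X1: Hn_eq n ([n] ++ rev (w0 n j) ++ [n] ++ [n] ++ w0 n (S j) ++ [n])
                            ([n] ++ Sw n j ++ [n])).
        { rewrite e1. rewrite <- !app_assoc. apply Heq_l. simpl. apply (Heq_pair n _ _ n hn1). }
        eapply Heq_trans. exact X1. clear X1. rewrite e2.
        assert (Epar: Nat.even i = negb (Nat.even j)).
        { destruct Hev as [N HN]. replace i with (j + (2*(N-1)) + 1) by lia.
          rewrite Nat.add_1_r, even_S, Nat.even_add_mul_2. reflexivity. }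
        rewrite Epar. destruct (Nat.even j); simpl.
        -- rewrite rev_Tl. unfold Tl. set (v := vword (j+1-1)). set (l := j+1).
           match goal with |- Hn_eq _ ?L _ => replace L with ((n :: rev v ++ l :: v) ++ n :: n :: []) by leq end.
           eapply Heq_trans. apply (Heq_pair n _ _ n hn1). rewrite app_nil_r. apply Heq_refl.
        -- rewrite rev_Tl. unfold Tl. set (v := vword (j+1-1)). set (l := j+1).
           match goal with |- Hn_eq _ ?L _ => replace L with ([] ++ n :: n :: (rev v ++ [l] ++ v ++ [n])) by leq end.
           eapply Heq_trans. apply (Heq_pair n _ _ n hn1). apply Heq_refl.
Qed.

End S.

Close Scope nat_scope.
Open Scope R_scope.

Lemma mat_app_scale l A x : mat_app (mat_scale l A) x = vscale l (mat_app A x).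
Proof. destruct A as [[[a b] c] d]. destruct x. unfold mat_app, mat_scale, vscale. simpl. f_equal; ring. Qed.

Lemma mat_app_mul A B x : mat_app (mat_mul A B) x = mat_app A (mat_app B x).
Proof. destruct A as [[[a b] c] d], B as [[[a' b'] c'] d']. destruct x. unfold mat_app, mat_mul. simpl. f_equal; ring. Qed.

Lemma vscale_comp a b x : vscale a (vscale b x) = vscale (a * b)%C x.
Proof. destruct x. unfold vscale. simpl. f_equal; ring. Qed.

Lemma Cmult_neq a b : a <> RtoC 0 -> b <> RtoC 0 -> (a * b)%C <> RtoC 0.
Proof. apply Cmult_neq_0. Qed.

Lemma proj_app A B x : proj_eq A B -> exists l, l <> RtoC 0 /\ mat_app A x = vscale l (mat_app B x).
Proof. intros [l [nl ->]]. exists l. split; auto. apply mat_app_scale. Qed.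

Lemma proj_app' A B x : proj_eq A B -> exists l, l <> RtoC 0 /\ mat_app B x = vscale l (mat_app A x).
Proof. intros [l [nl ->]]. exists (/ l)%C. split.
  - intro h. apply nl. rewrite <- (Cmult_1_l l). rewrite <- (Cinv_r l) by auto.
    rewrite h. ring.
  - rewrite mat_app_scale, vscale_comp. destruct (mat_app B x). unfold vscale; simpl. f_equal; field; auto.
Qed.

Lemma Cconj_R r : Cconj (RtoC r) = RtoC r.
Proof. unfold Cconj, RtoC. simpl. f_equal. ring. Qed.

Lemma unit_cb H A x : sigm H -> is_unitary H A -> in_closed_ball H x -> in_closed_ball H (mat_app A x).
Proof.
  intros s U [nx hx]. split.
  - intro e. apply nx.
    assert (h1: herm H x (RtoC 1, RtoC 0) = RtoC 0).
    { rewrite <- U, e. unfold herm. simpl. ring. }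
    assert (h2: herm H x (RtoC 0, RtoC 1) = RtoC 0).
    { rewrite <- U, e. unfold herm. simpl. ring. }
    destruct x as [X Y]. destruct H as [a b d]. unfold herm in h1, h2. cbn [fst snd ha hb Defs.hd] in h1, h2.
    assert (k1: (RtoC a * X + b * Y)%C = RtoC 0).
    { rewrite <- h1. rewrite !Cconj_R. ring. }
    assert (k2: (Cconj b * X + RtoC d * Y)%C = RtoC 0).
    { rewrite <- h2. rewrite !Cconj_R. ring. }
    assert (Dn: (RtoC a * RtoC d - b * Cconj b)%C <> RtoC 0).
    { unfold sigm, nrm in s. simpl in s. destruct b as [b1 b2]. unfold Cconj, Cmult, Cminus, Cplus, Copp, RtoC, Re, Im in *; simpl in *.
      intro e0. injection e0. intros. lra. }
    assert (ex: (X * (RtoC a * RtoC d - b * Cconj b))%C = RtoC 0).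
    { transitivity (RtoC d * (RtoC a * X + b * Y) - b * (Cconj b * X + RtoC d * Y))%C. ring.
      rewrite k1, k2. ring. }
    assert (ey: (Y * (RtoC a * RtoC d - b * Cconj b))%C = RtoC 0).
    { transitivity (RtoC a * (Cconj b * X + RtoC d * Y) - Cconj b * (RtoC a * X + b * Y))%C. ring.
      rewrite k1, k2. ring. }
    apply Cmult_integral in ex. apply Cmult_integral in ey.
    destruct ex as [ex|ex]; [|contradiction]. destruct ey as [ey|ey]; [|contradiction].
    subst. reflexivity.
  - unfold hr in *. rewrite U. auto.
Qed.

Lemma Ar_unit H A x y z : is_unitary H A -> Ar H (mat_app A x) (mat_app A y) (mat_app A z) = Ar H x y z.
Proof. intros U. unfold Ar. rewrite T_unit; auto. Qed.

Lemma Ar_sc H a b c x y z : a <> RtoC 0 -> b <> RtoC 0 -> c <> RtoC 0 ->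
  Ar H (vscale a x) (vscale b y) (vscale c z) = Ar H x y z.
Proof. intros. unfold Ar. rewrite argT_s1, argT_s2, argT_s3; auto. Qed.

Definition ve n w := valid_word n w /\ even_word w.

Lemma ve_app n u v : ve n u -> ve n v -> ve n (u ++ v).
Proof. intros [vu [k1 e1]] [vv [k2 e2]]. split. apply Forall_app; auto.
  exists (k1 + k2)%nat. rewrite length_app. lia. Qed.

Lemma ve_rev n u : ve n u -> ve n (rev u).
Proof. intros [vu eu]. split. apply valid_rev; auto. unfold even_word. rewrite length_rev. auto. Qed.

Lemma transport n H rho z u v x : Gn_rep n H rho -> ve n z -> ve n u -> ve n v ->
  Hn_eq n (z ++ u) v ->
  exists l, l <> RtoC 0 /\ mat_app (rho z) (mat_app (rho u) x) = vscale l (mat_app (rho v) x).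
Proof.
  intros [U [_ [Hm He]]] [vz ez] [vu eu] [vv ev] h.
  destruct (proj_app' _ _ x (Hm z u vz ez vu eu)) as [l1 [n1 e1]].
  rewrite mat_app_mul in e1. rewrite e1.
  destruct (ve_app n z u (conj vz ez) (conj vu eu)) as [vzu ezu].
  destruct (proj_app _ _ x (He _ _ vzu ezu vv ev h)) as [l2 [n2 e2]].
  rewrite e2, vscale_comp. exists (l1 * l2)%C. split; auto. apply Cmult_neq; auto.
Qed.

Lemma G1 n H rho a a' b b' x y x' : sigm H -> Gn_rep n H rho ->
  ve n a -> ve n a' -> ve n b -> ve n b' ->
  Hn_eq n (rev a ++ a') (rev b ++ b') ->
  Ar H (mat_app (rho a) x) (mat_app (rho a') y) (mat_app (rho a) x')
  = Ar H (mat_app (rho b) x) (mat_app (rho b') y) (mat_app (rho b) x').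
Proof.
  intros s G va va' vb vb' h.
  set (z := b ++ rev a).
  assert (vz: ve n z) by (apply ve_app; auto; apply ve_rev; auto).
  assert (h1: Hn_eq n (z ++ a) b).
  { unfold z. rewrite <- app_assoc. pose proof (Heq_l n b (rev a ++ a) [] (Heq_inv n a (proj1 va))).
    rewrite app_nil_r in H0. auto. }
  assert (h2: Hn_eq n (z ++ a') b').
  { unfold z. rewrite <- app_assoc. eapply Heq_trans. apply Heq_l. exact h.
    rewrite app_assoc. pose proof (Heq_r n b' (b ++ rev b) [] (Heq_inv' n b (proj1 vb))). auto. }
  destruct G as [U GG]. rewrite <- (Ar_unit H (rho z)) by (apply U; apply vz).
  destruct (transport n H rho z a b x (conj U GG) vz va vb h1) as [l1 [n1 ->]].
  destruct (transport n H rho z a' b' y (conj U GG) vz va' vb' h2) as [l2 [n2 ->]].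
  destruct (transport n H rho z a b x' (conj U GG) vz va vb h1) as [l3 [n3 ->]].
  apply Ar_sc; auto.
Qed.

Lemma mod_hi a M : (M <= a)%nat -> (a < 2 * M)%nat -> (a mod M = a - M)%nat.
Proof. intros h1 h2. replace a with ((a - M) + 1 * M)%nat at 1 by lia.
  rewrite Nat.Div0.mod_add. apply Nat.mod_small. lia. Qed.

Ltac lcase := unfold lidx, prevm, nextm in *;
  repeat match goal with
  | |- context [Nat.leb ?a ?b] => destruct (Nat.leb_spec a b)
  | |- context [Nat.eq_dec ?a ?b] => destruct (Nat.eq_dec a b)
  end; lia.

Lemma arith_a N s : (3 <= N)%nat -> (s < 2*N-1)%nat ->
  lidx (2*N) (prevm (2*(2*N)-2) (2*s)) = lidx (2*N) (2 * ((s + (N-1)) mod (2*N-1))).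
Proof.
  intros hN hs. destruct (Nat.lt_ge_cases (s + (N-1)) (2*N-1)).
  - rewrite Nat.mod_small by lia. lcase.
  - rewrite mod_hi by lia. lcase.
Qed.

Lemma arith_b N s : (3 <= N)%nat -> (s < 2*N-1)%nat ->
  lidx (2*N) (2*s) = lidx (2*N) (2 * ((s + (N-1)) mod (2*N-1)) + 1).
Proof.
  intros hN hs. destruct (Nat.lt_ge_cases (s + (N-1)) (2*N-1)).
  - rewrite Nat.mod_small by lia. lcase.
  - rewrite mod_hi by lia. lcase.
Qed.

Lemma next_prev m k : (1 <= m)%nat -> (k < m)%nat -> nextw m (prevm m k) = k.
Proof. intros. unfold nextw, prevm. destruct (Nat.eq_dec k 0).
  destruct (Nat.eq_dec (m-1) (m-1)); lia. destruct (Nat.eq_dec (k-1) (m-1)); lia. Qed.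

Lemma nextw_m m k : nextw m k = nextm m k.
Proof. reflexivity. Qed.

Section Main.
Variable n : nat.
Variable N : nat.
Hypothesis HN : n = (2 * N)%nat.
Hypothesis HN3 : (3 <= N)%nat.
Variable H : hform.
Hypothesis Hs : sigm H.
Variable rho : word -> mat.
Hypothesis Hr : Gn_rep n H rho.

Lemma ve_vword i : (i <= n)%nat -> valid_word n (vword i).
Proof. intros. apply valid_seq. auto. Qed.

Lemma ve_w0 i : (i <= n - 2)%nat -> ve n (w0 n i).
Proof.
  intros hi. unfold w0. destruct (Nat.even i) eqn:E.
  - split. apply ve_vword; lia. unfold even_word, vword. rewrite length_rev, length_seq.
    apply Nat.even_spec; auto.
  - split. apply Forall_app. split. apply ve_vword; lia. constructor; [lia|constructor].
    unfold even_word, vword. rewrite length_app, length_rev, length_seq. simpl.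
    apply Nat.even_spec. rewrite Nat.add_1_r, even_S, E. reflexivity.
Qed.

Lemma ve_w j : (j < 2*n-2)%nat -> ve n (wword n j).
Proof.
  intros hj. destruct (Nat.lt_ge_cases j (n-1)).
  - rewrite wword_lo by auto. apply ve_w0. lia.
  - rewrite wword_hi by auto. destruct (ve_w0 (j - (n-1))) as [v [k e]]. lia.
    split.
    + apply Forall_app. split. constructor; [lia|constructor].
      apply Forall_app. split; auto. constructor; [lia|constructor].
    + exists (S k). rewrite !length_app. simpl. rewrite e. lia.
Qed.

Definition P (p q : vec) (j : nat) : vec :=
  mat_app (rho (wword n j)) (if Nat.even j then p else q).

Lemma cb_P p q j : in_closed_ball H p -> in_closed_ball H q -> (j < 2*n-2)%nat ->
  in_closed_ball H (P p q j).
Proof. intros hp hq hj. unfold P. apply unit_cb; auto.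
  destruct (ve_w j hj) as [v e]. apply (proj1 Hr); auto. destruct (Nat.even j); auto. Qed.

Lemma Sw_prev_rev k : (k < 2*n-2)%nat ->
  rev (Sw n (prevm (2*n-2) k)) = rev (wword n k) ++ wword n (prevm (2*n-2) k).
Proof. intros hk. unfold Sw. rewrite next_prev by lia. rewrite rev_app_distr, rev_involutive. reflexivity. Qed.

Lemma Hn4 : (4 <= n)%nat. Proof. lia. Qed.
Lemma Hev : Nat.Even n. Proof. exists N. auto. Qed.

Lemma p_terms p p' q : in_closed_ball H p -> in_closed_ball H p' -> in_closed_ball H q ->
  forall s, (s < n - 1)%nat ->
  Ar H (P p q (2*s)) (P p q (prevm (2*n-2) (2*s))) (P p' q (2*s))
  = Ar H (P p q (2*((s + (N-1)) mod (n-1))))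
         (P p q (nextm (2*n-2) (2*((s + (N-1)) mod (n-1)))))
         (P p' q (2*((s + (N-1)) mod (n-1)))).
Proof.
  intros hp hp' hq s hs.
  set (t := ((s + (N-1)) mod (n-1))%nat).
  assert (ht: (t < n-1)%nat) by (apply Nat.mod_upper_bound; lia).
  assert (m2: (2*n-2 = 2*(n-1))%nat) by lia.
  assert (Ep: Nat.even (prevm (2*n-2) (2*s)) = false).
  { rewrite even_prev. rewrite Nat.even_even. auto. exists (n-1)%nat. lia. lia. }
  assert (En: Nat.even (nextm (2*n-2) (2*t)) = false).
  { rewrite even_next. rewrite Nat.even_even. auto. exists (n-1)%nat. lia. lia. }
  unfold P. rewrite Ep, En, !Nat.even_even.
  apply (G1 n); auto.
  - apply ve_w; lia.
  - apply ve_w. apply prev_lt'; lia.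
  - apply ve_w; lia.
  - apply ve_w. apply next_lt'; lia.
  - rewrite <- Sw_prev_rev by lia. rewrite <- nextw_m.
    change (rev (wword n (2 * t)) ++ wword n (nextw (2 * n - 2) (2 * t))) with (Sw n (2*t)).
    eapply Heq_trans. apply Heq_rev. apply (Sw_canon n Hn4 Hev). apply prev_lt'; lia.
    rewrite Ep. cbv beta iota. rewrite rev_involutive.
    eapply Heq_trans. 2:{ apply Heq_sym. apply (Sw_canon n Hn4 Hev). lia. }
    rewrite Nat.even_even. cbv beta iota.
    assert (L: lidx n (prevm (2*n-2) (2*s)) = lidx n (2*t)).
    { unfold t. subst n. replace (2*N-1)%nat with (2*N-1)%nat by lia. apply arith_a; lia. }
    rewrite L. apply Heq_refl.
Qed.

Lemma q_terms p' q q' : in_closed_ball H p' -> in_closed_ball H q -> in_closed_ball H q' ->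
  forall s, (s < n - 1)%nat ->
  Ar H (P p' q (2*s+1)) (P p' q (prevm (2*n-2) (2*s+1))) (P p' q' (2*s+1))
  = Ar H (P p' q (2*((s + (N-1)) mod (n-1))+1))
         (P p' q (nextm (2*n-2) (2*((s + (N-1)) mod (n-1))+1)))
         (P p' q' (2*((s + (N-1)) mod (n-1))+1)).
Proof.
  intros hp hq hq' s hs.
  set (t := ((s + (N-1)) mod (n-1))%nat).
  assert (ht: (t < n-1)%nat) by (apply Nat.mod_upper_bound; lia).
  assert (Pv: prevm (2*n-2) (2*s+1) = (2*s)%nat).
  { unfold prevm. destruct (Nat.eq_dec (2*s+1) 0); lia. }
  assert (En: Nat.even (nextm (2*n-2) (2*t+1)) = true).
  { rewrite even_next. rewrite Nat.even_odd. auto. exists (n-1)%nat. lia. lia. }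
  unfold P. rewrite Pv, En, !Nat.even_odd, Nat.even_even.
  apply (G1 n); auto.
  - apply ve_w; lia.
  - apply ve_w; lia.
  - apply ve_w; lia.
  - apply ve_w. apply next_lt'; lia.
  - assert (Rq: rev (wword n (2*s+1)) ++ wword n (2*s) = rev (Sw n (2*s))).
    { unfold Sw. replace (nextw (2*n-2) (2*s)) with (2*s+1)%nat.
      rewrite rev_app_distr, rev_involutive. reflexivity.
      unfold nextw. destruct (Nat.eq_dec (2*s) (2*n-2-1)); lia. }
    rewrite Rq. rewrite <- nextw_m.
    change (rev (wword n (2 * t + 1)) ++ wword n (nextw (2 * n - 2) (2 * t + 1))) with (Sw n (2*t+1)).
    eapply Heq_trans. apply Heq_rev. apply (Sw_canon n Hn4 Hev). lia.
    rewrite Nat.even_even. cbv beta iota.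
    eapply Heq_trans. 2:{ apply Heq_sym. apply (Sw_canon n Hn4 Hev). lia. }
    rewrite Nat.even_odd. cbv beta iota.
    assert (L: lidx n (2*s) = lidx n (2*t+1)).
    { unfold t. subst n. apply arith_b; lia. }
    rewrite L. apply Heq_refl.
Qed.

Lemma sum_zero_p p p' q : in_closed_ball H p -> in_closed_ball H p' -> in_closed_ball H q ->
  ssum (fun s => Dterm H (P p q) (P p' q) (2*(n-1)) (2*s+0)) (n-1) = 0.
Proof.
  intros hp hp' hq. replace (2*(n-1))%nat with (2*n-2)%nat by lia. unfold Dterm.
  rewrite ssum_minus.
  rewrite (ssum_ext _ (fun s => Ar H (P p q (2*((s + (N-1)) mod (n-1))))
         (P p q (nextm (2*n-2) (2*((s + (N-1)) mod (n-1)))))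
         (P p' q (2*((s + (N-1)) mod (n-1)))))).
  2:{ intros j hj. rewrite Nat.add_0_r. apply p_terms; auto. }
  rewrite (ssum_cyc (fun t => Ar H (P p q (2*t)) (P p q (nextm (2*n-2) (2*t))) (P p' q (2*t)))) by lia.
  rewrite (ssum_ext (fun s => Ar H (P p q (2*s+0)) (P p q (nextm (2*n-2) (2*s+0))) (P p' q (2*s+0)))
          (fun t => Ar H (P p q (2*t)) (P p q (nextm (2*n-2) (2*t))) (P p' q (2*t)))).
  ring. intros j _. rewrite Nat.add_0_r. reflexivity.
Qed.

Lemma sum_zero_q p' q q' : in_closed_ball H p' -> in_closed_ball H q -> in_closed_ball H q' ->
  ssum (fun s => Dterm H (P p' q) (P p' q') (2*(n-1)) (2*s+1)) (n-1) = 0.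
Proof.
  intros hp hq hq'. replace (2*(n-1))%nat with (2*n-2)%nat by lia. unfold Dterm.
  rewrite ssum_minus.
  rewrite (ssum_ext _ (fun s => Ar H (P p' q (2*((s + (N-1)) mod (n-1))+1))
         (P p' q (nextm (2*n-2) (2*((s + (N-1)) mod (n-1))+1)))
         (P p' q' (2*((s + (N-1)) mod (n-1))+1)))).
  2:{ intros j hj. apply q_terms; auto. }
  rewrite (ssum_cyc (fun t => Ar H (P p' q (2*t+1)) (P p' q (nextm (2*n-2) (2*t+1))) (P p' q' (2*t+1)))) by lia.
  ring.
Qed.

End Main.

Theorem lemma5p6 (n : nat) (Hn6 : (6 <= n)%nat) (Hev : Nat.Even n)
  (H : hform) (Hsig : signature_pm H) (rho : word -> mat) (Hrho : Gn_rep n H rho) :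
  forall c p q c' p' q' : vec,
    in_closed_ball H c -> in_closed_ball H p -> in_closed_ball H q ->
    in_closed_ball H c' -> in_closed_ball H p' -> in_closed_ball H q' ->
    Area_n H n rho c p q = Area_n H n rho c' p' q'.
Proof.
  intros c p q c' p' q' hc hp hq hc' hp' hq'.
  destruct Hev as [N HN]. assert (HN3: (3 <= N)%nat) by lia.
  pose proof (sig_sigm H Hsig) as s.
  assert (AF: forall c0 p0 q0, Area_n H n rho c0 p0 q0 = 2 * F H c0 (P n rho p0 q0) (2*(n-1))).
  { intros. unfold Area_n, Area_pts. replace (2*(n-1))%nat with (2*n-2)%nat by lia.
    apply area_poly_F. lia. }
  rewrite !AF. f_equal.
  assert (M2: (2 <= n - 1)%nat) by lia.
  rewrite (F_c_indep H c c' (P n rho p q) (2*(n-1))); auto; try lia.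
  2:{ intros j hj. apply (cb_P n N HN HN3 H s rho Hrho); auto. lia. }
  pose proof (par_change H c' (P n rho p q) (P n rho p' q) 0 (n-1) s M2 ltac:(lia) hc') as E1.
  rewrite (sum_zero_p n N HN HN3 H s rho Hrho p p' q hp hp' hq) in E1.
  rewrite Rplus_0_r in E1. rewrite <- E1.
  2:{ intros j hj. apply (cb_P n N HN HN3 H s rho Hrho); auto. lia. }
  2:{ intros j hj. apply (cb_P n N HN HN3 H s rho Hrho); auto. lia. }
  rewrite (F_ext H c' _ (P n rho p' q)).
  2: lia.
  2:{ intros j hj. unfold P. simpl. destruct (Nat.even j); reflexivity. }
  pose proof (par_change H c' (P n rho p' q) (P n rho p' q') 1 (n-1) s M2 ltac:(lia) hc') as E2.
  rewrite (sum_zero_q n N HN HN3 H s rho Hrho p' q q' hp' hq hq') in E2.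
  rewrite Rplus_0_r in E2. rewrite <- E2.
  2:{ intros j hj. apply (cb_P n N HN HN3 H s rho Hrho); auto. lia. }
  2:{ intros j hj. apply (cb_P n N HN HN3 H s rho Hrho); auto. lia. }
  apply F_ext. lia. intros j hj. unfold P. simpl. destruct (Nat.even j); reflexivity.
Qed.
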